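(* Let $X\subseteq\{1,\dots,n\}$, $x\in X$, and assume $n\geq 2$. Then the sequence of left $\mathcal P_n$-modules \[ 0\longrightarrow\mathcal A_{X,x}\oplus\mathcal B_{X,x}\longrightarrow\mathcal P_n/J_{X-\{x\}}\longrightarrow\mathcal P_n/J_X\longrightarrow 0, \] in which the first map is induced by the inclusions $A_x\subseteq\mathcal P_n$ and $B_{X,x}\subseteq\mathcal P_n$ and the second by the identity of $\mathcal P_n$, is exact (i.e. $\mathcal A_{X,x}\oplus\mathcal B_{X,x}\to\mathcal P_n/J_{X-\{x\}}$ is a resolution of $\mathcal P_n/J_X$). Moreover, applying $\mathbb 1\otimes_{\mathcal P_n}-$ gives a resolution of $\mathbb 1\otimes_{\mathcal P_n}\mathcal P_n/J_X$, i.e. the complex $\mathbb 1\otimes_{\mathcal P_n}(\mathcal A_{X,x}\oplus\mathcal B_{X,x})\to\mathbb 1\otimes_{\mathcal P_n}\mathcal P_n/J_{X-\{x\}}\to\mathbb 1\otimes_{\mathcal P_n}\mathcal P_n/J_X\to 0$ is exact with the leftmost map injective.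
   Context: $R$ is a commutative ring, $\delta\in R$, and $\mathcal P_n=\mathcal P_n(R,\delta)$ is the partition algebra: the free $R$-module on set partitions (''diagrams'') of $\{-n,\dots,-1,1,\dots,n\}$ (negative = left nodes, positive = right nodes), with product by stacking (identifying right nodes of the first diagram with left nodes of the second), taking the induced partition on outer nodes, and multiplying by $\delta$ for each component consisting only of middle nodes. $\mathbb 1$ is the trivial right module $R$ on which permutation diagrams (all blocks of the form $\{-i,j\}$) act as the identity and other diagrams as $0$. For $Z\subseteq\{1,\dots,n\}$, $J_Z$ is the left ideal spanned by diagrams in which among the right nodes labelled by $Z$ there is a singleton block or two distinct nodes in the same block. $A_x$ is the span of diagrams in which the right node $x$ is a singleton; $B_{X,x}$ the span of diagrams in which $x$ is in the same block as another element of $X$; $\mathcal A_{X,x}=A_x/(A_x\cap J_{X-\{x\}})$ and $\mathcal B_{X,x}=B_{X,x}/(B_{X,x}\cap J_{X-\{x\}})$. *)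

(* Defs.v *)
From HB Require Import structures.
From mathcomp Require Import all_boot all_order all_algebra.
Set Implicit Arguments. Unset Strict Implicit. Unset Printing Implicit Defensive.
Import GRing.Theory.
Local Open Scope ring_scope.

(* Node convention: left node -(i+1) is [inl i], right node (j+1) is [inr j] *)
(* for i j : 'I_n.  A subset Z of {1..n} is a {set 'I_n} (shifted by one).   *)
Section Diagrams.
Variable n : nat.

Definition node := ('I_n + 'I_n)%type.

Definition diagram := {P : {set {set node}} | partition P [set: node]}.

Definition same_block (d : diagram) (a b : node) : bool := b \in pblock (val d) a.

Definition is_perm_diagram (d : diagram) : bool :=
  [forall B in val d, (#|[set i : 'I_n | inl i \in B]| == 1%N)
                   && (#|[set j : 'I_n | inr j \in B]| == 1%N)].

(* Stacking: nodes of the stacked picture are left nodes of d1 ([inl (inl i)]),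
   middle nodes = right nodes of d1 = left nodes of d2 ([inl (inr i)]),
   and right nodes of d2 ([inr j]). *)
Definition snode := ('I_n + 'I_n + 'I_n)%type.

Definition emb1 (a : node) : snode :=
  match a with inl i => inl (inl i) | inr j => inl (inr j) end.
Definition emb2 (a : node) : snode :=
  match a with inl i => inl (inr i) | inr j => inr j end.
Definition embo (a : node) : snode :=
  match a with inl i => inl (inl i) | inr j => inr j end.
Definition is_middle (w : snode) : bool :=
  match w with inl (inr _) => true | _ => false end.

Definition stack_edge0 (d1 d2 : diagram) (w w' : snode) : bool :=
  [exists a : node, exists b : node,
     [&& emb1 a == w, emb1 b == w' & same_block d1 a b]]
  || [exists a : node, exists b : node,
     [&& emb2 a == w, emb2 b == w' & same_block d2 a b]].

Definition stack_edge (d1 d2 : diagram) : rel snode :=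
  fun w w' => stack_edge0 d1 d2 w w' || stack_edge0 d1 d2 w' w.

Lemma stack_edge_sym d1 d2 : symmetric (stack_edge d1 d2).
Proof. by move=> w w'; rewrite /stack_edge orbC. Qed.

Definition stack_conn (d1 d2 : diagram) : rel snode := connect (stack_edge d1 d2).

Definition outer_rel (d1 d2 : diagram) : rel node :=
  fun a b => stack_conn d1 d2 (embo a) (embo b).

Lemma outer_rel_equiv d1 d2 :
  {in [set: node] & &, equivalence_rel (outer_rel d1 d2)}.
Proof.
move=> a b c _ _ _; split; first exact: connect0.
have sym := sym_connect_sym (@stack_edge_sym d1 d2).
rewrite /outer_rel /stack_conn => Hab; apply/idP/idP => H.
- by apply: connect_trans H; rewrite sym.
- exact: connect_trans Hab H.
Qed.

Definition dcomp (d1 d2 : diagram) : diagram :=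
  exist _ (equivalence_partition (outer_rel d1 d2) [set: node])
          (equivalence_partitionP (outer_rel_equiv d1 d2)).

Definition dloops (d1 d2 : diagram) : nat :=
  #|[set C in equivalence_partition (stack_conn d1 d2) [set: snode]
     | [forall w in C, is_middle w]]|.

Definition J_set (Z : {set 'I_n}) (d : diagram) : bool :=
  [exists z in Z, [set inr z] \in val d]
  || [exists z1 in Z, exists z2 in Z, (z1 != z2) && same_block d (inr z1) (inr z2)].

Definition A_set (x : 'I_n) (d : diagram) : bool := [set inr x] \in val d.

Definition B_set (X : {set 'I_n}) (x : 'I_n) (d : diagram) : bool :=
  [exists y in X, (y != x) && same_block d (inr x) (inr y)].

End Diagrams.

Section PartitionAlgebra.
Variables (R : comPzRingType) (delta : R) (n : nat).

Definition palg := {ffun diagram n -> R^o}.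

Definition pmul (f g : palg) : palg :=
  [ffun d => \sum_(d1 : diagram n) \sum_(d2 : diagram n)
     (if dcomp d1 d2 == d then f d1 * g d2 * delta ^+ dloops d1 d2 else 0)].

(* the trivial right module 1: the augmentation R-linear map P_n -> R *)
Definition paug (f : palg) : R := \sum_(d : diagram n | is_perm_diagram d) f d.

Definition dspan (S : pred (diagram n)) (f : palg) : Prop :=
  forall d, f d != 0 -> S d.

Definition Jmod (Z : {set 'I_n}) : palg -> Prop := dspan (J_set Z).
Definition Amod (x : 'I_n) : palg -> Prop := dspan (A_set x).
Definition Bmod (X : {set 'I_n}) (x : 'I_n) : palg -> Prop := dspan (B_set X x).

Definition pmul2 (p : palg) (v : palg * palg) : palg * palg :=
  (pmul p v.1, pmul p v.2).

End PartitionAlgebra.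

(* Modules are subquotients M/N with N, M predicates on an ambient module.  *)
Section Modules.
Variables (R : comPzRingType) (A : Type) (aug : A -> R).
Variables (V : lmodType R) (act : A -> V -> V).

Definition Rspan (S : V -> Prop) (v : V) : Prop :=
  exists k (c : 'I_k -> R) (w : 'I_k -> V),
    (forall i, S (w i)) /\ v = \sum_(i < k) c i *: w i.

Definition is_left_submodule (M : V -> Prop) : Prop :=
  [/\ M 0, (forall u v, M u -> M v -> M (u + v)),
      (forall (r : R) v, M v -> M (r *: v)) & (forall p v, M v -> M (act p v))].

(* 1 (x)_A (M/N) = (M/N) / span{ p.m - aug(p) m }, i.e. the subquotient
   M / (N + span{ p.m - aug(p) m : m in M }) *)
Definition triv_rel (M : V -> Prop) : V -> Prop :=
  Rspan (fun v => exists p m, M m /\ v = act p m - aug p *: m).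

Definition triv_tensor_bot (M N : V -> Prop) : V -> Prop :=
  fun v => exists u w, N u /\ triv_rel M w /\ v = u + w.

End Modules.

(* Exactness of 0 -> M1/N1 -f-> M2/N2 -g-> M3/N3 -> 0, the maps being
   induced by f and g on the ambient modules. *)
Definition sq_short_exact {V1 V2 V3 : zmodType}
  (M1 N1 : V1 -> Prop) (M2 N2 : V2 -> Prop) (M3 N3 : V3 -> Prop)
  (f : V1 -> V2) (g : V2 -> V3) : Prop :=
  [/\ (forall v, M1 v -> M2 (f v)) /\ (forall v, N1 v -> N2 (f v)),
      (forall v, M2 v -> M3 (g v)) /\ (forall v, N2 v -> N3 (g v)),
      (* injectivity of M1/N1 -> M2/N2 *)
      (forall v, M1 v -> N2 (f v) -> N1 v),
      (* exactness in the middle: im = ker *)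
      (forall v, M1 v -> N3 (g (f v))) /\
      (forall w, M2 w -> N3 (g w) -> exists v, M1 v /\ N2 (f v - w))
    & (* surjectivity of M2/N2 -> M3/N3 *)
      (forall w, M3 w -> exists v, M2 v /\ N3 (g v - w))].

Section Prop46Data.
Variables (R : comPzRingType) (n : nat) (X : {set 'I_n}) (x : 'I_n).

Definition sum_top : palg R n * palg R n -> Prop :=
  fun v => Amod x v.1 /\ Bmod X x v.2.
Definition sum_bot : palg R n * palg R n -> Prop :=
  fun v => (Amod x v.1 /\ Jmod (X :\ x) v.1) /\ (Bmod X x v.2 /\ Jmod (X :\ x) v.2).

Definition sum_map (v : palg R n * palg R n) : palg R n := v.1 + v.2.

Definition all_palg : palg R n -> Prop := fun _ => True.
End Prop46Data.

(* Main.v *)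
Require Import Defs.
From HB Require Import structures.
From mathcomp Require Import all_boot all_order all_algebra.
Import GRing.Theory.
Set Implicit Arguments. Unset Strict Implicit. Unset Printing Implicit Defensive.

Section Comb.
Variable n : nat.
Implicit Types d m : diagram n.

Lemma cover_d d a : a \in cover (val d).
Proof. by rewrite (cover_partition (valP d)) inE. Qed.

Lemma tI_d d : trivIset (val d).
Proof. exact: partition_trivIset (valP d). Qed.

Lemma same_blockE d a b : same_block d a b = (pblock (val d) a == pblock (val d) b).
Proof. by rewrite eq_pblock ?cover_d ?tI_d. Qed.

Lemma sb_refl d a : same_block d a a.
Proof. by rewrite same_blockE. Qed.

Lemma sb_sym d a b : same_block d a b = same_block d b a.
Proof. by rewrite !same_blockE eq_sym. Qed.

Lemma sb_trans d a b c : same_block d a b -> same_block d b c -> same_block d a c.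
Proof. by rewrite !same_blockE => /eqP-> . Qed.

Lemma A_setP x d : reflect (forall b, same_block d (inr x) b -> b = inr x) (A_set x d).
Proof.
apply: (iffP idP) => [H b | H].
  have E := def_pblock (tI_d d) H (set11 _).
  by rewrite /same_block E inE => /eqP.
rewrite /A_set; have -> : [set inr x] = pblock (val d) (inr x).
  apply/setP => b; rewrite inE; apply/eqP/idP => [-> | /H //].
  by rewrite mem_pblock cover_d.
by rewrite pblock_mem ?cover_d.
Qed.

Definition mkdiag (f : node n -> option 'I_n) : diagram n :=
  exist _ (preim_partition f [set: node n]) (preim_partitionP f [set: node n]).

Lemma sb_mkdiag f a b : same_block (mkdiag f) a b = (f a == f b).
Proof.
rewrite /same_block /= /preim_partition pblock_equivalence_partition ?inE //.
by move=> u v w _ _ _; split=> // /eqP->.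
Qed.

Lemma connect_sub_rel (T : finType) (e Q : rel T) :
  (forall a, Q a a) -> (forall a b c, Q a b -> Q b c -> Q a c) ->
  (forall a b, e a b -> Q a b) -> forall a b, connect e a b -> Q a b.
Proof.
move=> Qr Qt Qe a b /connectP [p pth ->]; elim: p a pth => //= c p IH a /andP[eac pc].
exact: Qt (Qe _ _ eac) (IH _ pc).
Qed.

Lemma stack_edge_cases d1 d2 w w' : stack_edge d1 d2 w w' ->
  (exists a b, [/\ w = emb1 a, w' = emb1 b & same_block d1 a b]) \/
  (exists a b, [/\ w = emb2 a, w' = emb2 b & same_block d2 a b]).
Proof.
rewrite /stack_edge /stack_edge0.
case/orP => /orP [] /existsP [a /existsP [b /and3P [/eqP ea /eqP eb sab]]].
- by left; exists a, b.
- by right; exists a, b.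
- by left; exists b, a; rewrite sb_sym.
- by right; exists b, a; rewrite sb_sym.
Qed.

Lemma stack_edge1 d1 d2 a b : same_block d1 a b -> stack_edge d1 d2 (emb1 a) (emb1 b).
Proof.
move=> h; rewrite /stack_edge /stack_edge0; apply/orP; left; apply/orP; left.
by apply/existsP; exists a; apply/existsP; exists b; rewrite !eqxx h.
Qed.

Lemma stack_edge2 d1 d2 a b : same_block d2 a b -> stack_edge d1 d2 (emb2 a) (emb2 b).
Proof.
move=> h; rewrite /stack_edge /stack_edge0; apply/orP; left; apply/orP; right.
by apply/existsP; exists a; apply/existsP; exists b; rewrite !eqxx h.
Qed.

Lemma sb_dcomp d1 d2 a b : same_block (dcomp d1 d2) a b = outer_rel d1 d2 a b.
Proof.
by rewrite /same_block /= pblock_equivalence_partition ?inE //; apply: outer_rel_equiv.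
Qed.

Lemma A_dcomp x d1 d2 : A_set x d2 -> A_set x (dcomp d1 d2).
Proof.
move/A_setP => H; apply/A_setP => b; rewrite sb_dcomp /outer_rel /stack_conn /=.
have iso : forall w w', stack_edge d1 d2 w w' -> (w == inr x) ==> (w' == inr x).
  move=> w w' /stack_edge_cases [[a [c [-> -> _]]]|[a [c [-> -> h]]]].
    by case: a.
  case: a h => [i|j] h //=; apply/implyP => /eqP [ej]; subst j.
  by rewrite (H _ h).
have Qr : forall a, (a == inr x :> snode n) ==> (a == inr x) by move=> a; apply/implyP.
have Qt : forall a b' c : snode n, (a == inr x) ==> (b' == inr x) ->
    (b' == inr x) ==> (c == inr x) -> (a == inr x) ==> (c == inr x).
  by move=> a b' c; case: (a == inr x); case: (b' == inr x); case: (c == inr x).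
move=> hc; have := connect_sub_rel Qr Qt iso hc; rewrite /= eqxx /=.
by case: b {hc} => //= j /eqP [->].
Qed.

Lemma sb_dcomp_r d1 d2 z1 z2 : same_block d2 (inr z1) (inr z2) ->
  same_block (dcomp d1 d2) (inr z1) (inr z2).
Proof.
move=> h; rewrite sb_dcomp /outer_rel /stack_conn /=.
by apply: connect1; apply: (stack_edge2 d1 h).
Qed.

Lemma J_dcomp Z d1 d2 : J_set Z d2 -> J_set Z (dcomp d1 d2).
Proof.
case/orP => [/existsP [z /andP [zZ h]] | /existsP [z1 /andP [z1Z /existsP [z2 /andP [z2Z /andP [ne h]]]]]].
  by apply/orP; left; apply/existsP; exists z; rewrite zZ; exact: (A_dcomp d1 h).
apply/orP; right; apply/existsP; exists z1; rewrite z1Z; apply/existsP; exists z2.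
by rewrite z2Z ne (sb_dcomp_r d1 h).
Qed.

Lemma B_dcomp X x d1 d2 : B_set X x d2 -> B_set X x (dcomp d1 d2).
Proof.
case/existsP => y /andP [yX /andP [ne h]]; apply/existsP; exists y.
by rewrite yX ne (sb_dcomp_r d1 h).
Qed.

End Comb.

Section Comb2.
Variable n : nat.
Implicit Types d m : diagram n.

Definition proj (pm : 'I_n -> node n) (w : snode n) : node n :=
  match w with inl (inl i) => inl i | inl (inr i) => pm i | inr j => inr j end.

Lemma dcomp_id d m (pm : 'I_n -> node n) :
  (forall a b, same_block d a b -> same_block d (proj pm (emb1 a)) (proj pm (emb1 b))) ->
  (forall a b, same_block m a b -> same_block d (proj pm (emb2 a)) (proj pm (emb2 b))) ->
  (forall a b, same_block d a b -> outer_rel d m a b) -> dcomp d m = d.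
Proof.
move=> H1 H2 H3; apply: val_inj; rewrite /= -[RHS](equivalence_partition_pblock (valP d)).
rewrite /equivalence_partition; apply: eq_imset => a; apply/setP => b; rewrite !inE /=.
apply/idP/idP => [h|h]; last exact: H3 _ _ h.
have Qr : forall w, same_block d (proj pm w) (proj pm w) by move=> w; apply: sb_refl.
have Qt : forall u v w, same_block d (proj pm u) (proj pm v) ->
   same_block d (proj pm v) (proj pm w) -> same_block d (proj pm u) (proj pm w).
  by move=> u v w; apply: sb_trans.
have Qe : forall u v, stack_edge d m u v -> same_block d (proj pm u) (proj pm v).
  by move=> u v /stack_edge_cases [[a' [b' [-> -> h']]]|[a' [b' [-> -> h']]]];
    [apply: H1 | apply: H2].
have := connect_sub_rel Qr Qt Qe h.
by case: a {h}; case: b.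
Qed.

Lemma dloops0 d m : (forall i, exists j, same_block m (inl i) (inr j)) -> dloops d m = 0%N.
Proof.
move=> H; apply/eqP; rewrite cards_eq0; apply/eqP/setP => C; rewrite !inE.
case CP: (C \in _) => //=; move/imsetP: CP => [w _ ->].
apply/negbTE/negP => /forallP all.
have [w' [cw' nm]] : exists w', stack_conn d m w w' /\ ~~ is_middle w'.
  clear all; case: w => [[i|i]|j].
  - by exists (inl (inl i)); split; [exact: connect0 | by []].
  - case: (H i) => j hj; exists (inr j); split => //; apply: connect1.
    exact: (stack_edge2 d hj).
  - by exists (inr j); split; [exact: connect0 | by []].
by move: (all w'); rewrite !inE cw' /= (negbTE nm).
Qed.

Lemma outer_from d m (good : pred (node n)) :
  (forall j, good (inr j) -> same_block m (inl j) (inr j)) ->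
  forall a b, good a -> good b -> same_block d a b -> outer_rel d m a b.
Proof.
move=> Hg.
have sym := sym_connect_sym (@stack_edge_sym n d m).
have c1 : forall a, good a -> stack_conn d m (emb1 a) (embo a).
  case=> [i|j] ga; first exact: connect0.
  by apply: connect1; apply: (stack_edge2 d (Hg j ga)).
move=> a b ga gb h; rewrite /outer_rel /stack_conn.
apply: connect_trans (c1 _ gb); apply: connect_trans (connect1 (stack_edge1 m h)).
by rewrite sym; apply: c1.
Qed.

End Comb2.

Section Special.
Variables (n : nat) (x y : 'I_n).
Hypothesis yx : y != x.

Definition gxy (i : 'I_n) := if i == x then y else i.
Definition fA (a : node n) : option 'I_n :=
  match a with inl i => Some (gxy i) | inr j => if j == x then None else Some j end.
Definition fB (a : node n) : option 'I_n :=
  match a with inl i => Some (gxy i) | inr j => Some (gxy j) end.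
Definition mA := mkdiag fA.
Definition mB := mkdiag fB.

Lemma A_mA : A_set x mA.
Proof.
apply/A_setP => b; rewrite sb_mkdiag /= eqxx.
by case: b => [i|j] //=; case: (j =P x) => [->|].
Qed.

Lemma B_mB (X : {set 'I_n}) : y \in X -> B_set X x mB.
Proof.
move=> yX; apply/existsP; exists y; rewrite yX yx sb_mkdiag /= /gxy eqxx.
by rewrite (negbTE yx).
Qed.

Lemma gxy_ne j : j != x -> gxy j = j.
Proof. by rewrite /gxy => /negbTE ->. Qed.

Lemma comp_A d : A_set x d -> dcomp d mA = d /\ dloops d mA = 0%N.
Proof.
move=> hA; have Hs := A_setP _ _ hA.
split; last first.
  apply: dloops0 => i; exists (gxy i); rewrite sb_mkdiag /=.
  have gnx : gxy i != x by rewrite /gxy; case: (i =P x) => [_|/eqP].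
  by rewrite (negbTE gnx).
apply: (dcomp_id (pm := fun i => inr (gxy i))).
- move=> a b h.
  case: (a =P inr x) => [ea|na].
    by subst a; rewrite (Hs _ h); apply: sb_refl.
  case: (b =P inr x) => [eb|nb].
    by subst b; rewrite sb_sym in h; move: (Hs _ h) => /na.
  have e : forall c, c <> inr x -> proj (fun i => inr (gxy i)) (emb1 c) = c.
    by case=> [i|j] //= nj; rewrite gxy_ne //; apply/eqP => ej; apply: nj; rewrite ej.
  by rewrite !e.
- move=> a b; rewrite sb_mkdiag => /eqP.
  case: a b => [i|j] [i'|j'] /=.
  + by move=> [->]; apply: sb_refl.
  + by case: eqP => // _ [->]; apply: sb_refl.
  + by case: eqP => // _ [->]; apply: sb_refl.
  + case: eqP => [->|_]; case: eqP => [->|_] // ; first by move=> _; apply: sb_refl.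
    by move=> [->]; apply: sb_refl.
- move=> a b h.
  case: (a =P inr x) => [ea|na].
    by subst a; rewrite (Hs _ h) /outer_rel; apply: connect0.
  have nb : b != inr x.
    by apply/eqP => eb; subst b; rewrite sb_sym in h; move: (Hs _ h) => /na.
  apply: (outer_from (good := fun c => c != inr x)) => //; last by apply/eqP.
  move=> j /= nj; have jx : j != x by apply: contraNneq nj => ->.
  by rewrite sb_mkdiag /= gxy_ne // (negbTE jx).
Qed.

Lemma comp_B d : same_block d (inr x) (inr y) -> dcomp d mB = d /\ dloops d mB = 0%N.
Proof.
move=> hxy; split; last first.
  by apply: dloops0 => i; exists i; rewrite sb_mkdiag.
apply: (dcomp_id (pm := fun i => inr i)).
- by move=> a b h; case: a h; case: b.
- have key : forall k k', gxy k = gxy k' -> same_block d (inr k) (inr k').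
    move=> k k'; rewrite /gxy; case: eqP => [->|nk]; case: eqP => [->|nk'] //.
    + by move=> _; apply: sb_refl.
    + by move=> <-.
    + by move=> ->; rewrite sb_sym.
    + by move=> ->; apply: sb_refl.
  move=> a b; rewrite sb_mkdiag => /eqP.
  by case: a b => [i|j] [i'|j'] /= [/key].
- move=> a b h; apply: (outer_from (good := predT)) => // j _.
  by rewrite sb_mkdiag.
Qed.

End Special.


Section Sets.
Variables (n : nat) (X : {set 'I_n}) (x : 'I_n).
Hypothesis xX : x \in X.
Implicit Types d : diagram n.

Lemma A_notB d : A_set x d -> ~~ B_set X x d.
Proof.
move/A_setP => H; apply/existsP => [[y /andP [_ /andP [yx /H [ey]]]]].
by move: yx; rewrite ey eqxx.
Qed.

Lemma A_J d : A_set x d -> J_set X d.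
Proof. by move=> h; apply/orP; left; apply/existsP; exists x; rewrite xX. Qed.

Lemma B_J d : B_set X x d -> J_set X d.
Proof.
case/existsP => y /andP [yX /andP [yx h]]; apply/orP; right.
apply/existsP; exists x; rewrite xX; apply/existsP; exists y.
by rewrite yX eq_sym yx h.
Qed.

Lemma J_mono (Z1 Z2 : {set 'I_n}) d : Z1 \subset Z2 -> J_set Z1 d -> J_set Z2 d.
Proof.
move/subsetP => s; case/orP => [/existsP [z /andP [zZ h]] | /existsP [z1 /andP [z1Z /existsP [z2 /andP [z2Z h]]]]].
  by apply/orP; left; apply/existsP; exists z; rewrite (s _ zZ).
apply/orP; right; apply/existsP; exists z1; rewrite (s _ z1Z); apply/existsP; exists z2.
by rewrite (s _ z2Z).
Qed.

Lemma J_split d : J_set X d -> ~~ A_set x d -> ~~ B_set X x d -> J_set (X :\ x) d.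
Proof.
move=> hJ nA nB.
case/orP: hJ => [/existsP [z /andP [zZ h]] | /existsP [z1 /andP [z1X /existsP [z2 /andP [z2X /andP [ne h]]]]]].
  apply/orP; left; apply/existsP; exists z; rewrite !inE zZ andbT h andbT.
  by apply: contraNneq nA => ez; rewrite -ez.
have Bc : forall y, y \in X -> y != x -> same_block d (inr x) (inr y) -> False.
  move=> y yX yx hb; move/negP: nB; apply; apply/existsP; exists y.
  by rewrite yX yx hb.
case: (z1 =P x) => [e1|n1].
  by subst z1; case: (Bc z2 z2X); rewrite // eq_sym.
case: (z2 =P x) => [e2|n2].
  by subst z2; case: (Bc z1 z1X) => //; rewrite sb_sym.
apply/orP; right; apply/existsP; exists z1; rewrite !inE z1X andbT.
apply/andP; split; first by apply/eqP.
apply/existsP; exists z2; rewrite !inE z2X ne h !andbT; by apply/eqP.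
Qed.

Lemma A_notperm d : A_set x d -> ~~ is_perm_diagram d.
Proof.
move=> hA; apply/negP => /forallP /(_ [set inr x]); rewrite (hA : [set inr x] \in val d) /= => /andP [/eqP c _].
have : [set i : 'I_n | inl i \in [set (inr x : node n)]] = set0.
  by apply/setP => i; rewrite !inE.
by move=> e; move: c; rewrite e cards0.
Qed.

Lemma B_notperm d : B_set X x d -> ~~ is_perm_diagram d.
Proof.
case/existsP => y /andP [_ /andP [yx h]]; apply/negP => /forallP.
move=> /(_ (pblock (val d) (inr x))); rewrite pblock_mem ?cover_d //= => /andP [_ /eqP c].
have : [set x; y] \subset [set j : 'I_n | inr j \in pblock (val d) (inr x)].
  apply/subsetP => j; rewrite !inE => /orP [] /eqP ->; last exact: h.
  by rewrite mem_pblock cover_d.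
by move/subset_leq_card; rewrite c cards2 eq_sym yx.
Qed.

End Sets.

Local Open Scope ring_scope.

Section RspanTh.
Variables (R : comPzRingType) (V : lmodType R) (S : V -> Prop).

Lemma Rspan0 : Rspan S 0.
Proof. by exists 0%N, (fun _ => 0), (fun _ => 0); split => [[]//|]; rewrite big_ord0. Qed.

Lemma Rspan1 v : S v -> Rspan S v.
Proof.
by move=> h; exists 1%N, (fun _ => 1), (fun _ => v); split => //; rewrite big_ord1 scale1r.
Qed.

Lemma RspanD u v : Rspan S u -> Rspan S v -> Rspan S (u + v).
Proof.
move=> [k1 [c1 [w1 [h1 ->]]]] [k2 [c2 [w2 [h2 ->]]]].
exists (k1 + k2)%N, (fun i => match split i with inl a => c1 a | inr b => c2 b end),
  (fun i => match split i with inl a => w1 a | inr b => w2 b end); split.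
  by move=> i; case: (split i).
rewrite big_split_ord /=; congr (_ + _); apply: eq_bigr => i _.
  by rewrite (unsplitK (inl _)).
by rewrite (unsplitK (inr _)).
Qed.

Lemma RspanZ r v : Rspan S v -> Rspan S (r *: v).
Proof.
move=> [k [c [w [h ->]]]]; exists k, (fun i => r * c i), w; split => //.
by rewrite scaler_sumr; apply: eq_bigr => i _; rewrite scalerA.
Qed.

Lemma Rspan_sum (I : finType) (F : I -> V) :
  (forall i, Rspan S (F i)) -> Rspan S (\sum_i F i).
Proof.
move=> h; apply: (big_ind (fun v => Rspan S v)) => //; [exact: Rspan0 | exact: RspanD].
Qed.

End RspanTh.

Lemma Rspan_map (R : comPzRingType) (V W : lmodType R) (S : V -> Prop) (T : W -> Prop)
  (f : V -> W) :
  (forall a b, f (a + b) = f a + f b) -> f 0 = 0 -> (forall c a, f (c *: a) = c *: f a) ->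
  (forall v, S v -> T (f v)) -> forall v, Rspan S v -> Rspan T (f v).
Proof.
move=> fD f0 fZ fST v [k [c [w [h ->]]]]; exists k, c, (fun i => f (w i)); split.
  by move=> i; apply: fST.
rewrite (big_morph f fD f0); apply: eq_bigr => i _; exact: fZ.
Qed.

Section Alg.
Variables (R : comPzRingType) (delta : R) (n : nat).
Local Notation P := (palg R n).

Definition dd (d : diagram n) : P := [ffun e => (e == d)%:R].

Lemma pmulD (p f g : P) : @pmul R delta n p (f + g) = @pmul R delta n p f + @pmul R delta n p g.
Proof.
apply/ffunP => e; rewrite !ffunE -big_split; apply: eq_bigr => d1 _.
rewrite -big_split; apply: eq_bigr => d2 _ /=; rewrite ffunE.
by case: ifP => _; rewrite ?addr0 // mulrDr mulrDl.
Qed.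

Lemma pmul0 (p : P) : @pmul R delta n p 0 = 0.
Proof.
apply/ffunP => e; rewrite !ffunE big1 // => d1 _; rewrite big1 // => d2 _.
by rewrite ffunE mulr0 mul0r; case: ifP.
Qed.

Lemma pmul_dd d m : dloops d m = 0%N -> @pmul R delta n (dd d) (dd m) = dd (dcomp d m).
Proof.
move=> hl; apply/ffunP => e; rewrite !ffunE (bigD1 d) //= [X in _ + X]big1; last first.
  move=> d1 nd1; apply: big1 => d2 _; rewrite ffunE (negbTE nd1) mul0r mul0r.
  by case: ifP.
rewrite addr0 (bigD1 m) //= [X in _ + X]big1; last first.
  move=> d2 nd2; rewrite !ffunE (negbTE nd2) mulr0 mul0r; by case: ifP.
by rewrite addr0 !ffunE !eqxx hl expr0 !mulr1 eq_sym; case: eqP.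
Qed.

Lemma paug_dd d : ~~ is_perm_diagram d -> paug (dd d) = 0.
Proof.
move=> np; apply: big1 => d' pd'; rewrite ffunE; case: eqP => // ed.
by move: np; rewrite -ed pd'.
Qed.

Lemma expand (f : P) : f = \sum_d f d *: dd d.
Proof.
apply/ffunP => e; rewrite sum_ffunE (bigD1 e) //= big1 ?addr0.
  by rewrite !ffunE eqxx; rewrite /GRing.scale /=; rewrite mulr1.
by move=> d nd; rewrite !ffunE eq_sym (negbTE nd); rewrite /GRing.scale /= mulr0.
Qed.

Lemma dspan0 (S : pred (diagram n)) : dspan S (0 : P).
Proof. by move=> d; rewrite ffunE eqxx. Qed.

Lemma dspanD (S : pred (diagram n)) (f g : P) : dspan S f -> dspan S g -> dspan S (f + g).
Proof.
move=> hf hg d; rewrite ffunE; case: (f d =P 0) => [->|/eqP /hf h _ //].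
by rewrite add0r; exact: hg.
Qed.

Lemma dspanZ (S : pred (diagram n)) r (f : P) : dspan S f -> dspan S (r *: f).
Proof.
move=> hf d; rewrite ffunE; case: (f d =P 0) => [->|/eqP /hf h _ //].
by rewrite scaler0 eqxx.
Qed.

Lemma dspanN (S : pred (diagram n)) (f : P) : dspan S f -> dspan S (- f).
Proof. by move=> hf d; rewrite ffunE oppr_eq0; apply: hf. Qed.

Lemma dspan_sub (S1 S2 : pred (diagram n)) (f : P) :
  (forall d, S1 d -> S2 d) -> dspan S1 f -> dspan S2 f.
Proof. by move=> h hf d /hf /h. Qed.

Lemma dspan_pmul (S : pred (diagram n)) (p : P) (f : P) : (forall d1 d2, S d2 -> S (dcomp d1 d2)) ->
  dspan S f -> dspan S (@pmul R delta n p f).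
Proof.
move=> HS hf e; rewrite ffunE => nz; apply/negPn/negP => nS; move/eqP: nz; apply.
apply: big1 => d1 _; apply: big1 => d2 _; case: eqP => // ed.
case: (f d2 =P 0) => [->|/eqP /hf Sd2]; first by rewrite mulr0 mul0r.
by move: nS; rewrite -ed (HS _ _ Sd2).
Qed.

Lemma left_sub (S : pred (diagram n)) : (forall d1 d2, S d2 -> S (dcomp d1 d2)) ->
  is_left_submodule (@pmul R delta n) (@dspan R n S).
Proof.
move=> HS; split; [exact: dspan0 | exact: dspanD | exact: dspanZ |].
by move=> p v; apply: dspan_pmul.
Qed.

Definition restrict (S : pred (diagram n)) (f : P) : P :=
  [ffun d => if S d then f d else 0].

Lemma restrict_span S f : dspan S (restrict S f).
Proof. by move=> d; rewrite ffunE; case: (S d) => //; rewrite eqxx. Qed.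

End Alg.

Lemma dd_span R n (S : pred (diagram n)) m : S m -> dspan S (dd R m).
Proof. by move=> h d; rewrite ffunE; case: (d =P m) => [->|] //; rewrite eqxx. Qed.

Unset Implicit Arguments.
Set Strict Implicit.

Lemma sum_fst (R : comPzRingType) (V W : lmodType R) (I : finType) (F : I -> V * W) :
  (\sum_i F i).1 = \sum_i (F i).1.
Proof. exact: (big_morph fst). Qed.

Lemma sum_snd (R : comPzRingType) (V W : lmodType R) (I : finType) (F : I -> V * W) :
  (\sum_i F i).2 = \sum_i (F i).2.
Proof. exact: (big_morph snd). Qed.

Theorem proposition4p6 (R : comPzRingType) (delta : R) (n : nat)
  (X : {set 'I_n}) (x : 'I_n) :
  (2 <= n)%N -> x \in X ->
  [/\ (* A_x, B_{X,x}, J_X, J_{X-x} are left ideals of P_n *)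
      [/\ is_left_submodule (@pmul R delta n) (@Amod R n x),
          is_left_submodule (@pmul R delta n) (@Bmod R n X x),
          is_left_submodule (@pmul R delta n) (@Jmod R n X)
        & is_left_submodule (@pmul R delta n) (@Jmod R n (X :\ x))],
      (* 0 -> A_{X,x} (+) B_{X,x} -> P_n/J_{X-x} -> P_n/J_X -> 0 is exact *)
      sq_short_exact (@sum_top R n X x) (@sum_bot R n X x)
                     (@all_palg R n) (@Jmod R n (X :\ x))
                     (@all_palg R n) (@Jmod R n X)
                     (@sum_map R n) id
    & (* after applying 1 (x)_{P_n} - : exact, leftmost map injective *)
      sq_short_exact
        (@sum_top R n X x)
        (triv_tensor_bot (@paug R n) (@pmul2 R delta n)
                         (@sum_top R n X x) (@sum_bot R n X x))
        (@all_palg R n)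
        (triv_tensor_bot (@paug R n) (@pmul R delta n)
                         (@all_palg R n) (@Jmod R n (X :\ x)))
        (@all_palg R n)
        (triv_tensor_bot (@paug R n) (@pmul R delta n)
                         (@all_palg R n) (@Jmod R n X))
        (@sum_map R n) id].
Proof.
move=> n2 xX.
have [y yx] : exists y : 'I_n, y != x.
  have l0 : (0 < n)%N by apply: leq_trans n2.
  have l1 : (1 < n)%N by [].
  case: (Ordinal l0 =P x) => [e|ne]; last by exists (Ordinal l0); apply/eqP.
  by exists (Ordinal l1); rewrite -e.
have JXx : forall f, @Jmod R n (X :\ x) f -> @Jmod R n X f.
  by move=> f; apply: dspan_sub => d; apply: J_mono; apply: subsetDl.
have topJ : forall v, @sum_top R n X x v -> @Jmod R n X (sum_map v).
  move=> v [hA hB]; apply: dspanD.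
    by apply: (dspan_sub _ hA) => d; apply: A_J.
  by apply: (dspan_sub _ hB) => d; apply: B_J.
have splitJ : forall w, @Jmod R n X w -> @Jmod R n (X :\ x)
    (restrict (A_set x) w + restrict (B_set X x) w - w).
  move=> w hw d; rewrite !ffunE.
  case hA: (A_set x d).
    by rewrite (negbTE (A_notB X hA)) addr0 subrr eqxx.
  case hB: (B_set X x d); first by rewrite add0r subrr eqxx.
  rewrite add0r sub0r oppr_eq0 => /hw hJ.
  by apply: J_split => //; rewrite ?hA ?hB.
have rtop : forall w, @sum_top R n X x (restrict (A_set x) w, restrict (B_set X x) w).
  by move=> w; split; apply: restrict_span.
split.
- split; apply: left_sub => d1 d2.
  + exact: A_dcomp.
  + exact: B_dcomp.
  + exact: J_dcomp.
  + exact: J_dcomp.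
- split.
  + split => // v [[_ h1] [_ h2]]; exact: dspanD.
  + by split.
  + move=> [v1 v2] [hA hB] /= hJ; split; split => // d nz.
      have Ad := hA _ nz.
      have : v2 d = 0.
        by apply/eqP; exact: (contraNT (hB d) (A_notB X Ad)).
      by move=> e; apply: hJ; rewrite ffunE e addr0.
    have Bd := hB _ nz.
    have : v1 d = 0.
      apply/eqP; apply: contraTT Bd => /hA Ad. exact: (A_notB X Ad).
    by move=> e; apply: hJ; rewrite ffunE e add0r.
  + split; first exact: topJ.
    move=> w _ hw; exists (restrict (A_set x) w, restrict (B_set X x) w).
    by split; [apply: rtop | apply: splitJ].
  + move=> w _; exists w; split => //; rewrite subrr; exact: dspan0.
- split.
  + split => // v [u [w [hu [hw ->]]]].
    exists (sum_map u), (sum_map w); split.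
      by case: hu => [[_ h1] [_ h2]]; apply: dspanD.
    split; last by rewrite /sum_map /= addrACA.
    apply: (Rspan_map (f := @sum_map R n) _ _ _ _ hw).
    * by move=> a b; rewrite /sum_map /= addrACA.
    * by rewrite /sum_map /= addr0.
    * by move=> c a; rewrite /sum_map /= scalerDr.
    * move=> _ [p [m [_ ->]]]; exists p, (sum_map m); split => //.
      by rewrite /sum_map /pmul2 /= pmulD scalerDr opprD addrACA.
  + split => // v [u [w [hu [hw ->]]]]; exists u, w; split => //; exact: JXx.
  + move=> [v1 v2] [hA hB] _; exists 0, (v1, v2); split.
      by split; split; exact: dspan0.
    split; last by rewrite add0r.
    have ev : (v1, v2) = \sum_d (v1 d *: (dd R d, 0) + v2 d *: (0, dd R d)).
      apply: injective_projections; rewrite ?sum_fst ?sum_snd /=.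
        rewrite [LHS]expand; apply: eq_bigr => d _ /=; by rewrite scaler0 addr0.
      rewrite [LHS]expand; apply: eq_bigr => d _ /=; by rewrite scaler0 add0r.
    rewrite ev; apply: Rspan_sum => d; apply: RspanD.
      case: (v1 d =P 0) => [->|/eqP nz]; first by rewrite scale0r; exact: Rspan0.
      apply: RspanZ; apply: Rspan1.
      have Ad := hA d nz; have [ec el] := comp_A yx Ad.
      exists (dd R d), (dd R (mA x y), 0); split.
        by split; [apply: dd_span; apply: A_mA | exact: dspan0].
      by rewrite /pmul2 /= pmul_dd // ec pmul0 (paug_dd R (A_notperm Ad)) scale0r subr0.
    case: (v2 d =P 0) => [->|/eqP nz]; first by rewrite scale0r; exact: Rspan0.
    apply: RspanZ; apply: Rspan1.
    have Bd := hB d nz.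
    case/existsP: (Bd) => y' /andP [y'X /andP [y'x hxy']].
    have [ec el] := comp_B hxy'.
    exists (dd R d), (0, dd R (mB x y')); split.
      by split; [exact: dspan0 | apply: dd_span; apply: B_mB].
    by rewrite /pmul2 /= pmul_dd // ec pmul0 (paug_dd R (B_notperm Bd)) scale0r subr0.
  + split.
    * move=> v hv; exists (sum_map v), 0; split; first exact: topJ.
      by split; [exact: Rspan0 | rewrite addr0].
    * move=> w _ [u [t [hu [ht ->]]]].
      exists (restrict (A_set x) u, restrict (B_set X x) u); split; first exact: rtop.
      exists (restrict (A_set x) u + restrict (B_set X x) u - u), (- t); split.
        exact: splitJ.
      split; first by rewrite -scaleN1r; apply: RspanZ.
      by rewrite /sum_map /= opprD addrA.
  + move=> w _; exists w; split => //; exists 0, 0; split; first exact: dspan0.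
    by split; [exact: Rspan0 | rewrite subrr addr0].
Qed.
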